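(* Let $\mathbb{X}$ be a two-dimensional real Banach space, $x_1,x_2\in S_{\mathbb{X}}$ and $\epsilon_1,\epsilon_2\in(0,1)$. If $F(x_1,\epsilon_1)=F(x_2,\epsilon_2)$, then $x_1=\pm x_2$ and $\epsilon_1=\epsilon_2$.
   Context: $S_{\mathbb{X}}$ is the unit sphere. For $x,y\in\mathbb{X}$ and $\epsilon\in[0,1)$, $x\perp_D^{\epsilon} y$ means $\|x+\lambda y\|\geq\sqrt{1-\epsilon^2}\,\|x\|$ for all $\lambda\in\mathbb{R}$; $F(x,\epsilon)=\{y\in\mathbb{X}: x\perp_D^{\epsilon}y\}$. *)

(* Defs.v *)
From HB Require Import structures.
From mathcomp Require Import all_boot all_order all_algebra.
From mathcomp Require Import all_classical all_reals all_analysis.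
Set Implicit Arguments. Unset Strict Implicit. Unset Printing Implicit Defensive.
Import Order.TTheory GRing.Theory Num.Theory.
Import numFieldNormedType.Exports.
Local Open Scope classical_set_scope.
Local Open Scope ring_scope.

Definition dim_two (R : realType) (X : normedModType R) : Prop :=
  exists e1 e2 : X,
    (forall x : X, exists a b : R, x = a *: e1 + b *: e2) /\
    (forall a b : R, a *: e1 + b *: e2 = 0 -> a = 0 /\ b = 0).

Definition unit_sphere (R : realType) (X : normedModType R) : set X :=
  [set x | `|x| = 1].

Definition eps_BJ_orth (R : realType) (X : normedModType R) (eps : R) (x y : X)
  : Prop :=
  forall lam : R, Num.sqrt (1 - eps ^+ 2) * `|x| <= `|x + lam *: y|.

Definition Fset (R : realType) (X : normedModType R) (x : X) (eps : R) : set X :=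
  [set y | eps_BJ_orth eps x y].

Arguments dim_two {R} X.
Arguments unit_sphere {R} X _.

(* Main.v *)
Require Import Defs.
From HB Require Import structures.
From mathcomp Require Import all_boot all_order all_algebra.
From mathcomp Require Import all_classical all_reals all_analysis.
From mathcomp Require Import ring lra.
Import Order.TTheory GRing.Theory Num.Theory.
Import numFieldNormedType.Exports.
Local Open Scope classical_set_scope.
Local Open Scope ring_scope.
Set Implicit Arguments. Unset Strict Implicit.


Definition P1 (R : realType) (N : R -> R -> R) (d c : R) : Prop :=
  forall a s : R, d * `|a + c * s| <= N a s.

Lemma perturb (R : realType) (a s c c' : R) :
  `|a + c' * s| <= `|a + c * s| + `|c' - c| * `|s|.
Proof.
have -> : a + c' * s = (a + c * s) + (c' - c) * s by ring.
by rewrite -normrM ler_normD.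
Qed.

Lemma push (R : realType) (N : R -> R -> R) (d q U : R) : 0 < d ->
  q <= U -> P1 N d q -> ~ P1 N d U ->
  (forall t, q <= t -> t < U -> P1 N d t -> exists c', t < c' /\ c' <= U /\ P1 N d c') -> False.
Proof.
move=> d0 qU Pq nPU slack.
set E := [set c | q <= c /\ c <= U /\ P1 N d c].
have hE : has_sup E.
  split; first by exists q; split => //; split.
  by exists U => y [_ []].
have qt : q <= sup E by apply: sup_upper_bound => //; split => //; split.
have tU : sup E <= U.
  apply: ge_sup; first by exists q; split => //; split.
  by move=> y [_ []].
have Pt : P1 N d (sup E).
  move=> a s; rewrite leNgt; apply/negP => H.
  set g := d * `|a + sup E * s| - N a s.
  have g0 : 0 < g by rewrite /g subr_gt0.
  have e0 : 0 < g / (d * `|s| + 1).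
    by apply: divr_gt0 => //; apply: ltr_wpDl => //; apply: mulr_ge0 => //; apply: ltW.
  have [e [qe [eU Pe]] lte] := sup_adherent e0 hE.
  have ete : e <= sup E by apply: sup_upper_bound.
  have h1 := Pe a s.
  have h2 := perturb a s e (sup E).
  have h3 : `|sup E - e| * (d * `|s| + 1) < g.
    rewrite -ltr_pdivlMr; last by apply: ltr_wpDl => //; apply: mulr_ge0 => //; apply: ltW.
    rewrite ger0_norm ?subr_ge0 //; lra.
  have h4 : d * `|a + sup E * s| <= d * `|a + e * s| + d * (`|sup E - e| * `|s|).
    by rewrite -mulrDr ler_pM2l.
  have h5 : 0 <= `|sup E - e| by [].
  rewrite /g in h3; nra.
have [tlt|teq] := ltP (sup E) U; last first.
  by apply: nPU; have -> : U = sup E by apply/eqP; rewrite eq_le tU teq.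
have [c' [tc [cU Pc]]] := slack _ qt tlt Pt.
have : c' <= sup E by apply: sup_upper_bound => //; split; [exact: le_trans qt (ltW tc)|split].
by rewrite leNgt tc.
Qed.



Lemma P1_refl (R : realType) (N : R -> R -> R) d c :
  P1 (fun a s => N a (- s)) d c <-> P1 N d (- c).
Proof.
split=> h a s.
  by have := h a (- s); rewrite opprK mulrN mulNr.
by have := h a (- s); rewrite mulrNN.
Qed.

Lemma push_down (R : realType) (N : R -> R -> R) (d q L : R) : 0 < d ->
  L <= q -> P1 N d q -> ~ P1 N d L ->
  (forall t, L < t -> t <= q -> P1 N d t -> exists c', L <= c' /\ c' < t /\ P1 N d c') -> False.
Proof.
move=> d0 Lq Pq nPL slack.
apply: (@push R (fun a s => N a (- s)) d (- q) (- L)) => //.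
- by rewrite lerN2.
- by apply/P1_refl; rewrite opprK.
- by move/P1_refl; rewrite opprK.
move=> t qt tL /P1_refl Pt.
have h1 : L < - t by rewrite ltrNr.
have h2 : - t <= q by rewrite lerNl.
have [c' [Lc [ct Pc]]] := slack (- t) h1 h2 Pt.
exists (- c'); split; first lra.
split; first lra.
by apply/P1_refl; rewrite opprK.
Qed.

Definition P2 (R : realType) (N : R -> R -> R) (d c : R) : Prop :=
  forall a s : R, d * `|a + c * s| <= `|c| * N a s.

Lemma part3_pos (R : realType) (N : R -> R -> R) (d1 d2 K : R) :
  0 < d1 -> 0 < d2 -> 0 < K -> (forall a s, `|s| <= K * N a s) ->
  (forall c, P1 N d1 c <-> P2 N d2 c) ->
  forall c, 0 < c -> P1 N d1 c -> c = d2 / d1.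
Proof.
move=> d10 d20 K0 Kb E c c0 Pc.
have N0 : forall a s, 0 <= N a s.
  by move=> a s; have := Kb a s; have := normr_ge0 s; nra.
have nP0 : ~ P1 N d1 0.
  move/E => h; have := h 1 0; rewrite normr0 !mul0r addr0 normr1 mulr1; lra.
have dd0 : 0 < d2 / d1 by apply: divr_gt0.
case: (ltgtP c (d2 / d1)) => // [clt|cgt].
- exfalso; apply: (@push_down R N d1 c 0) => //; first exact: ltW.
  move=> t t0 tc /E Pt.
  have tlt : d1 * t < d2.
    by have := le_lt_trans tc clt; rewrite ltr_pdivlMr // mulrC.
  set eta := Num.min t ((d2 - d1 * t) / (d1 * d2 * K)).
  have eta0 : 0 < eta.
    rewrite lt_min t0 /=; apply: divr_gt0; first lra.
    by apply: mulr_gt0 => //; apply: mulr_gt0.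
  have etat : eta <= t by rewrite ge_min lexx.
  have etaK : eta * (d1 * d2 * K) <= d2 - d1 * t.
    rewrite -ler_pdivlMr; first by rewrite ge_min lexx orbT.
    by apply: mulr_gt0 => //; apply: mulr_gt0.
  exists (t - eta); split; first lra.
  split; first lra.
  move=> a s.
  have h1 := perturb a s t (t - eta).
  have e1 : `|t - eta - t| = eta by rewrite addrAC subrr add0r normrN gtr0_norm.
  rewrite e1 in h1.
  have h2 := Pt a s; rewrite (gtr0_norm t0) in h2.
  have h3 := Kb a s.
  have h4 : d2 * (d1 * `|a + (t - eta) * s|) <= d2 * N a s.
    have h5 : d1 * `|a + (t - eta) * s| <= d1 * `|a + t * s| + d1 * (eta * `|s|).
      by rewrite -mulrDr ler_pM2l.
    have h6 : d1 * (eta * `|s|) <= d1 * (eta * (K * N a s)).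
      by rewrite ler_pM2l // ler_pM2l.
    have h7 : (d1 * d2 * K) * (eta * N a s) <= (d2 - d1 * t) * N a s.
      by have := N0 a s; nra.
    have h8 : d1 * (d2 * `|a + t * s|) <= d1 * (t * N a s) by rewrite ler_pM2l.
    nra.
  by rewrite ler_pM2l in h4.
- exfalso.
  set U := `|N 0 1| / d1 + `|c| + 1.
  have cU : c <= U.
    rewrite /U; have := ler_norm c; have : 0 <= `|N 0 1| / d1 by apply: divr_ge0 => //; apply: ltW.
    lra.
  apply: (@push R N d1 c U) => //.
  + move=> h; have h01 := h 0 1; rewrite add0r mulr1 in h01.
    have U0 : 0 < U by exact: lt_le_trans c0 cU.
    rewrite (gtr0_norm U0) in h01.
    have : `|N 0 1| < d1 * U.
      have e : d1 * U = `|N 0 1| + d1 * `|c| + d1.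
        by rewrite /U !mulrDr mulr1 mulrCA divff ?mulr1 // gt_eqF.
      rewrite e; have := mulr_ge0 (ltW d10) (normr_ge0 c); lra.
    have := ler_norm (N 0 1); lra.
  move=> t ct tU Pt.
  have tgt : d2 < d1 * t.
    by have := lt_le_trans cgt ct; rewrite ltr_pdivrMr // mulrC.
  set eta := Num.min (U - t) ((d1 * t - d2) / (d1 * d2 * K)).
  have eta0 : 0 < eta.
    rewrite lt_min subr_gt0 tU /=; apply: divr_gt0; first lra.
    by apply: mulr_gt0 => //; apply: mulr_gt0.
  have etat : eta <= U - t by rewrite ge_min lexx.
  have etaK : eta * (d1 * d2 * K) <= d1 * t - d2.
    rewrite -ler_pdivlMr; first by rewrite ge_min lexx orbT.
    by apply: mulr_gt0 => //; apply: mulr_gt0.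
  have t0 : 0 < t by lra.
  exists (t + eta); split; first lra.
  split; first lra.
  apply/E => a s.
  have h1 := perturb a s t (t + eta).
  have e1 : `|t + eta - t| = eta by rewrite addrAC subrr add0r gtr0_norm.
  rewrite e1 in h1.
  have h2 := Pt a s.
  have h3 := Kb a s.
  rewrite (@gtr0_norm _ (t + eta)); last lra.
  have h4 : d1 * (d2 * `|a + (t + eta) * s|) <= d1 * ((t + eta) * N a s).
    have h5 : d2 * `|a + (t + eta) * s| <= d2 * `|a + t * s| + d2 * (eta * `|s|).
      by rewrite -mulrDr ler_pM2l.
    have h6 : d2 * (eta * `|s|) <= d2 * (eta * (K * N a s)).
      by rewrite ler_pM2l // ler_pM2l.
    have h7 : (d1 * d2 * K) * (eta * N a s) <= (d1 * t - d2) * N a s.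
      by have := N0 a s; nra.
    have h8 : d2 * (d1 * `|a + t * s|) <= d2 * N a s by rewrite ler_pM2l.
    have h9 : 0 <= d1 * eta * N a s by apply: mulr_ge0; [apply: mulr_ge0; lra | exact: N0].
    nra.
  by rewrite ler_pM2l in h4.
Qed.



Lemma P2_refl (R : realType) (N : R -> R -> R) d c :
  P2 (fun a s => N a (- s)) d c <-> P2 N d (- c).
Proof.
split=> h a s.
  by have := h a (- s); rewrite opprK mulrN mulNr normrN.
by have := h a (- s); rewrite mulrNN normrN.
Qed.

Lemma widen (R : realType) (N : R -> R -> R) (d K c c' : R) :
  0 < d -> d < 1 -> 0 < K -> (forall a s, `|s| <= K * N a s) ->
  (forall a s, `|a + c * s| <= N a s) ->
  `|c' - c| <= (1 - d) / (d * K) -> P1 N d c'.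
Proof.
move=> d0 d1 K0 Kb HB hc a s.
have N0 : forall a s, 0 <= N a s.
  by move=> a' s'; have := Kb a' s'; have := normr_ge0 s'; nra.
have h1 := perturb a s c c'.
have h2 := HB a s.
have h3 := Kb a s.
have h4 : `|c' - c| * (d * K) <= 1 - d.
  by rewrite -ler_pdivlMr // mulr_gt0.
have h5 : 0 <= `|c' - c| := normr_ge0 _.
have h6 := N0 a s.
have h7 : `|c' - c| * `|s| <= `|c' - c| * (K * N a s) by apply: ler_wpM2l.
have h8 : d * (`|c' - c| * (K * N a s)) <= (1 - d) * N a s.
  have := ler_wpM2r h6 h4; rewrite !mulrA; congr (_ <= _); ring.
nra.
Qed.

Lemma part3_real (R : realType) (N : R -> R -> R) (d1 d2 K c : R) :
  0 < d1 -> d1 < 1 -> 0 < d2 -> 0 < K -> (forall a s, `|s| <= K * N a s) ->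
  (forall c, P1 N d1 c <-> P2 N d2 c) ->
  (forall a s, `|a + c * s| <= N a s) -> False.
Proof.
move=> d10 d11 d20 K0 Kb E HB.
have nP0 : ~ P1 N d1 0.
  move/E => h; have := h 1 0; rewrite normr0 !mul0r addr0 normr1 mulr1; lra.
have Kb' : forall a s, `|s| <= K * N a (- s).
  by move=> a s; rewrite -normrN; apply: Kb.
have E' : forall c, P1 (fun a s => N a (- s)) d1 c <-> P2 (fun a s => N a (- s)) d2 c.
  move=> c'; rewrite P1_refl P2_refl; exact: E.
have key : forall c', P1 N d1 c' -> `|c'| = d2 / d1.
  move=> c' Pc; case: (ltgtP c' 0) => [cn|cp|c0].
  - rewrite ltr0_norm //; apply: (@part3_pos R (fun a s => N a (- s)) d1 d2 K) => //; first by rewrite oppr_gt0.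
    by apply/P1_refl; rewrite opprK.
  - by rewrite gtr0_norm //; apply: (@part3_pos R N d1 d2 K).
  - by exfalso; apply: nP0; rewrite -c0.
set eta := (1 - d1) / (d1 * K).
have eta0 : 0 < eta by apply: divr_gt0; [lra | apply: mulr_gt0].
have P1m : P1 N d1 (c - eta).
  apply: (@widen R N d1 K c) => //.
  by rewrite addrAC subrr add0r normrN gtr0_norm.
have P1p : P1 N d1 (c + eta).
  apply: (@widen R N d1 K c) => //.
  by rewrite addrAC subrr add0r gtr0_norm.
have P1c : P1 N d1 c.
  apply: (@widen R N d1 K c) => //.
  by rewrite subrr normr0; apply: ltW.
have k1 := key _ P1m.
have k2 := key _ P1p.
have : c = 0.
  move: k1 k2; case: (ler0P (c - eta)) => h1; case: (ler0P (c + eta)) => h2; lra.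
by move=> c0; apply: nP0; rewrite -c0.
Qed.

Lemma part2_real (R : realType) (N : R -> R -> R) (d1 d2 K c0 : R) :
  0 < d1 -> d1 < d2 -> 0 < K -> (forall a s, `|s| <= K * N a s) ->
  (forall c, P1 N d1 c <-> P1 N d2 c) -> P1 N d1 c0 -> False.
Proof.
move=> d10 d12 K0 Kb E Pc.
have d20 : 0 < d2 by lra.
have N0 : forall a s, 0 <= N a s.
  by move=> a s; have := Kb a s; have := normr_ge0 s; nra.
set U := `|N 0 1| / d1 + `|c0| + 1.
have cU : c0 < U.
  rewrite /U; have := ler_norm c0; have : 0 <= `|N 0 1| / d1 by apply: divr_ge0 => //; apply: ltW.
  lra.
apply: (@push R N d1 c0 U) => //; first exact: ltW.
- move=> h; have h01 := h 0 1; rewrite add0r mulr1 in h01.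
  have U0 : 0 < U.
    rewrite /U; have := normr_ge0 c0; have : 0 <= `|N 0 1| / d1 by apply: divr_ge0 => //; apply: ltW.
    lra.
  rewrite (gtr0_norm U0) in h01.
  have : `|N 0 1| < d1 * U.
    have e : d1 * U = `|N 0 1| + d1 * `|c0| + d1.
      by rewrite /U !mulrDr mulr1 mulrCA divff ?mulr1 // gt_eqF.
    rewrite e; have := mulr_ge0 (ltW d10) (normr_ge0 c0); lra.
  have := ler_norm (N 0 1); lra.
move=> t ct tU /E Pt.
set eta := Num.min (U - t) ((d2 - d1) / (d1 * d2 * K)).
have eta0 : 0 < eta.
  rewrite lt_min subr_gt0 tU /=; apply: divr_gt0; first lra.
  by apply: mulr_gt0 => //; apply: mulr_gt0.
have etat : eta <= U - t by rewrite ge_min lexx.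
have etaK : eta * (d1 * d2 * K) <= d2 - d1.
  rewrite -ler_pdivlMr; first by rewrite ge_min lexx orbT.
  by apply: mulr_gt0 => //; apply: mulr_gt0.
exists (t + eta); split; first lra.
split; first lra.
move=> a s.
have h1 := perturb a s t (t + eta).
have e1 : `|t + eta - t| = eta by rewrite addrAC subrr add0r gtr0_norm.
rewrite e1 in h1.
have h2 := Pt a s.
have h3 := Kb a s.
have h4 : d2 * (d1 * `|a + (t + eta) * s|) <= d2 * N a s.
  have h5 : d1 * `|a + (t + eta) * s| <= d1 * `|a + t * s| + d1 * (eta * `|s|).
    by rewrite -mulrDr ler_pM2l.
  have h6 : d1 * (eta * `|s|) <= d1 * (eta * (K * N a s)).
    by rewrite ler_pM2l // ler_pM2l.
  have h7 : (d1 * d2 * K) * (eta * N a s) <= (d2 - d1) * N a s.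
    by have := N0 a s; nra.
  have h8 : d1 * (d2 * `|a + t * s|) <= d1 * N a s by rewrite ler_pM2l.
  nra.
by rewrite ler_pM2l in h4.
Qed.



Lemma comb (R : realType) (X : normedModType R) (x v : X) (a b c d : R) :
  a = c -> b = d -> a *: x + b *: v = c *: x + d *: v.
Proof. by move=> -> ->. Qed.

Lemma nf1 (R : realType) (X : normedModType R) (x v : X) (k l c : R) :
  k *: (x + l *: (v - c *: x)) = (k - k * l * c) *: x + (k * l) *: v.
Proof.
rewrite !scalerDr !scalerN !scalerA scalerBl ?mulrA.
by rewrite addrA addrAC.
Qed.

Lemma F_P1 (R : realType) (X : normedModType R) (x v : X) (eps c : R) :
  `|x| = 1 ->
  (Fset x eps (v - c *: x) <->
   P1 (fun a s => `|a *: x + s *: v|) (Num.sqrt (1 - eps ^+ 2)) c).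
Proof.
move=> hx; split.
- move=> hF a s.
  have [k0|k0] := eqVneq (a + c * s) 0.
    by rewrite k0 normr0 mulr0; exact: normr_ge0.
  have hl := hF (s / (a + c * s)); rewrite hx mulr1 in hl.
  have e : a *: x + s *: v = (a + c * s) *: (x + (s / (a + c * s)) *: (v - c *: x)).
    rewrite nf1; apply: comb; field => //.
  rewrite e normrZ mulrC; apply: ler_wpM2l => //.
- move=> hP lam; rewrite /Fset /eps_BJ_orth /= hx mulr1.
  have := hP (1 - lam * c) lam.
  have -> : 1 - lam * c + c * lam = 1 by ring.
  rewrite normr1 mulr1.
  have -> : (1 - lam * c) *: x + lam *: v = 1 *: (x + lam *: (v - c *: x)).
    by rewrite nf1; apply: comb; ring.
  by rewrite scale1r.
Qed.

Lemma nf2 (R : realType) (X : normedModType R) (x1 x2 : X) (m l c : R) :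
  m *: (x2 + l *: (x2 - c *: x1)) = (- (m * l * c)) *: x1 + (m + m * l) *: x2.
Proof.
rewrite !scalerDr !scalerN !scalerA ?mulrA scaleNr scalerDl.
by rewrite addrA addrC.
Qed.

Lemma F_P2 (R : realType) (X : normedModType R) (x1 x2 : X) (eps c : R) :
  `|x2| = 1 -> 0 < Num.sqrt (1 - eps ^+ 2) ->
  (Fset x2 eps (x2 - c *: x1) <->
   P2 (fun a s => `|a *: x1 + s *: x2|) (Num.sqrt (1 - eps ^+ 2)) c).
Proof.
move=> hx d0; set d := Num.sqrt _ in d0 *; split.
- move=> hF a s.
  have [c0|c0] := eqVneq c 0.
    exfalso; have := hF (-1); rewrite hx mulr1 c0 scale0r subr0 scaleN1r addrN normr0.
    by rewrite leNgt d0.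
  have [k0|k0] := eqVneq (a + c * s) 0.
    by rewrite k0 normr0 mulr0; exact: mulr_ge0.
  have hl := hF (- a / (a + c * s)); rewrite hx mulr1 in hl.
  have e : a *: x1 + s *: x2 =
      ((a + c * s) / c) *: (x2 + (- a / (a + c * s)) *: (x2 - c *: x1)).
    by rewrite nf2; apply: comb; field; rewrite k0 c0.
  rewrite e normrZ normrM normrV ?unitfE // mulrA mulrCA divff ?normr_eq0 // mulr1.
  rewrite mulrC; apply: ler_wpM2l => //.
- move=> hP lam; rewrite /Fset /eps_BJ_orth /= hx mulr1.
  have [c0|c0] := eqVneq c 0.
    exfalso; have := hP 1 0; rewrite c0 normr0 !mul0r addr0 normr1 mulr1.
    by rewrite leNgt d0.
  have := hP (- (lam * c)) (1 + lam).
  have -> : - (lam * c) + c * (1 + lam) = c by ring.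
  have -> : (- (lam * c)) *: x1 + (1 + lam) *: x2 = 1 *: (x2 + lam *: (x2 - c *: x1)).
    by rewrite nf2; apply: comb; ring.
  rewrite scale1r mulrC ler_pM2l //.
  by rewrite normr_gt0.
Qed.



Lemma HB_lemma (R : realType) (X : normedModType R) (x v : X) :
  `|x| = 1 -> exists c : R, forall a s : R, `|a + c * s| <= `|a *: x + s *: v|.
Proof.
move=> hx.
have tri : forall a b : R, b - a <= `|a *: x + v| + `|b *: x + v|.
  move=> a b.
  have e : (b *: x + v) - (a *: x + v) = (b - a) *: x.
    by rewrite opprD addrACA subrr addr0 scalerBl.
  have h1 : `|b - a| = `|(b *: x + v) - (a *: x + v)| by rewrite e normrZ hx mulr1.
  have h2 := ler_normB (b *: x + v) (a *: x + v).
  have h3 := ler_norm (b - a).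
  lra.
set E := [set y | exists a, y = - `|a *: x + v| - a].
have hE : has_sup E.
  split; first by exists (- `|0 *: x + v| - 0); exists 0.
  exists (`|0 *: x + v| - 0) => y [a ->].
  by have := tri a 0; lra.
exists (sup E).
have low : forall a, - `|a *: x + v| - a <= sup E.
  by move=> a; apply: sup_upper_bound => //; exists a.
have upp : forall b, sup E <= `|b *: x + v| - b.
  move=> b; apply: ge_sup; first by exists (- `|0 *: x + v| - 0); exists 0.
  by move=> y [a ->]; have := tri a b; lra.
have one : forall a, `|a + sup E| <= `|a *: x + v|.
  move=> a; rewrite ler_norml; have := low a; have := upp a; lra.
move=> a s.
have [s0|s0] := eqVneq s 0.
  by rewrite s0 !mulr0 scale0r !addr0 normrZ hx mulr1.
have e1 : a + sup E * s = s * (a / s + sup E) by field.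
have e2 : a *: x + s *: v = s *: ((a / s) *: x + v).
  by rewrite scalerDr scalerA mulrCA mulfV ?mulr1.
rewrite e1 e2 normrM normrZ; apply: ler_wpM2l => //.
Qed.



Lemma K_lemma (R : realType) (X : normedModType R) (x v : X) :
  `|x| = 1 -> (forall t : R, v + t *: x != 0) ->
  exists K : R, 0 < K /\ forall a s : R, `|s| <= K * `|a *: x + s *: v|.
Proof.
move=> hx hv.
set f := fun t : R => `|v + t *: x|.
have cf : continuous f.
  move=> t; apply: (@continuous_comp _ _ _ (fun t : R => v + t *: x) Num.norm).
    apply: continuousD; first exact: cst_continuous.
    by apply: continuousZr_tmp.
  exact: norm_continuous.
set M := `|v| + 1.
have M0 : - M <= M by have := normr_ge0 v; rewrite /M; lra.
have [c0 _ hmin] := EVT_min M0 (continuous_subspaceT cf).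
have big : forall t, M < `|t| -> 1 <= f t.
  move=> t Mt; rewrite /f.
  have e : (v + t *: x) - v = t *: x by rewrite addrAC subrr add0r.
  have h1 := ler_normB (v + t *: x) v.
  rewrite e normrZ hx mulr1 in h1.
  rewrite /M in Mt; lra.
have m0 : 0 < f c0 by rewrite /f normr_gt0 hv.
set mm := Num.min (f c0) 1.
have mm0 : 0 < mm by rewrite lt_min m0 ltr01.
have lowf : forall t, mm <= f t.
  move=> t; have [tin|tout] := leP `|t| M.
    rewrite ge_min; apply/orP; left; apply: hmin.
    by rewrite in_itv /= -ler_norml.
  by rewrite ge_min; apply/orP; right; apply: big.
exists mm^-1; split; first by rewrite invr_gt0.
move=> a s.
have [s0|s0] := eqVneq s 0.
  by rewrite s0 normr0; apply: mulr_ge0; [rewrite invr_ge0 ltW | exact: normr_ge0].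
have e2 : a *: x + s *: v = s *: (v + (a / s) *: x).
  by rewrite scalerDr scalerA mulrCA mulfV ?mulr1 // addrC.
rewrite e2 normrZ.
have h := lowf (a / s); rewrite /f in h.
have i1 : mm^-1 * mm = 1 by rewrite mulVf // gt_eqF.
have i0 : 0 < mm^-1 by rewrite invr_gt0.
have s0' : 0 <= `|s| := normr_ge0 s.
have h2 : 0 <= mm^-1 * `|s| by apply: mulr_ge0 => //; apply: ltW.
nra.
Qed.



Lemma Fset_neg (R : realType) (X : normedModType R) (x y : X) (eps : R) :
  Fset (- x) eps y <-> Fset x eps y.
Proof.
split=> h lam; have := h (- lam); rewrite normrN.
  by rewrite scaleNr -opprD normrN.
have -> : - x + lam *: y = - (x + - lam *: y) by rewrite opprD scaleNr opprK.
by rewrite normrN.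
Qed.

Lemma d_bounds (R : realType) (eps : R) : 0 < eps < 1 ->
  0 < Num.sqrt (1 - eps ^+ 2) /\ Num.sqrt (1 - eps ^+ 2) < 1.
Proof.
case/andP=> e0 e1.
have h : 0 < 1 - eps ^+ 2 by rewrite subr_gt0 expr2; nra.
split; first by rewrite sqrtr_gt0.
rewrite -{2}sqrtr1 ltr_sqrt //; nra.
Qed.

Lemma exists_v (R : realType) (X : normedModType R) (x : X) :
  `|x| = 1 -> dim_two X -> exists v : X, forall t : R, v + t *: x != 0.
Proof.
move=> hx [e1 [e2 [sp ind]]].
have [[t1 h1]|n1] := pselect (exists t : R, e1 + t *: x = 0); last first.
  by exists e1 => t; apply/eqP => h0; apply: n1; exists t.
have [[t2 h2]|n2] := pselect (exists t : R, e2 + t *: x = 0); last first.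
  by exists e2 => t; apply/eqP => h0; apply: n2; exists t.
exfalso.
have E1 : e1 = - (t1 *: x) by apply/eqP; rewrite -addr_eq0 h1.
have E2 : e2 = - (t2 *: x) by apply/eqP; rewrite -addr_eq0 h2.
have [a0 b0] : t2 = 0 /\ - t1 = 0.
  apply: ind; rewrite E1 E2 !scalerN !scalerA mulNr scaleNr opprK mulrC.
  by rewrite addNr.
have z1 : e1 = 0 by rewrite E1 -[t1]opprK b0 oppr0 scale0r oppr0.
have z2 : e2 = 0 by rewrite E2 a0 scale0r oppr0.
have [a [b ex]] := sp x.
by move: hx; rewrite ex z1 z2 !scaler0 addr0 normr0 => /eqP; rewrite eq_sym oner_eq0.
Qed.

Unset Implicit Arguments. Set Strict Implicit.

Theorem theorem2p5 (R : realType) (X : completeNormedModType R)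
  (x1 x2 : X) (eps1 eps2 : R) :
  dim_two X ->
  unit_sphere X x1 -> unit_sphere X x2 ->
  0 < eps1 < 1 -> 0 < eps2 < 1 ->
  Fset x1 eps1 = Fset x2 eps2 ->
  (x1 = x2 \/ x1 = - x2) /\ eps1 = eps2.
Proof.
move=> dim hx1 hx2 he1 he2 hF.
rewrite /unit_sphere /= in hx1 hx2.
have [d10 d11] := d_bounds he1.
have [d20 d21] := d_bounds he2.
set d1 := Num.sqrt (1 - eps1 ^+ 2) in d10 d11.
set d2 := Num.sqrt (1 - eps2 ^+ 2) in d20 d21.
have hFp : forall y, Fset x1 eps1 y <-> Fset x2 eps2 y by move=> y; rewrite hF.
have [[t ht]|nd] := pselect (exists t : R, x2 + t *: x1 = 0); last first.
  exfalso.
  have hv : forall t : R, x2 + t *: x1 != 0.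
    by move=> t; apply/eqP => h0; apply: nd; exists t.
  have [K [K0 Kb]] := K_lemma hx1 hv.
  have [c HB] := HB_lemma x2 hx1.
  apply: (@part3_real R (fun a s => `|a *: x1 + s *: x2|) d1 d2 K c) => // c'.
  rewrite -F_P1 // -F_P2 //.
have X2 : x2 = - (t *: x1) by apply/eqP; rewrite -addr_eq0 ht.
have nt : `|t| = 1 by move: hx2; rewrite X2 normrN normrZ hx1 mulr1.
have hdir : x1 = x2 \/ x1 = - x2.
  case: (ler0P t) => h; [rewrite ler0_norm // in nt | rewrite gtr0_norm // in nt].
    left; rewrite X2 -scaleNr; have -> : - t = 1 by [].
    by rewrite scale1r.
  by right; rewrite X2 nt scale1r opprK.
split => //.
have hFx : forall y, Fset x1 eps1 y <-> Fset x1 eps2 y.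
  move=> y; case: hdir => hd.
    by rewrite hFp -hd.
  by rewrite hFp hd !Fset_neg.
have [v hv] := exists_v hx1 dim.
have [K [K0 Kb]] := K_lemma hx1 hv.
have [c0 HB] := HB_lemma v hx1.
set N := fun a s => `|a *: x1 + s *: v|.
have E : forall c, P1 N d1 c <-> P1 N d2 c.
  by move=> c; rewrite /N -!F_P1.
have P1c : forall d, 0 < d -> d < 1 -> P1 N d c0.
  move=> d d0 dl a s; apply: le_trans (HB a s).
  by have := normr_ge0 (a + c0 * s); nra.
have hd : d1 = d2.
  case: (ltgtP d1 d2) => // h.
    by exfalso; apply: (@part2_real R N d1 d2 K c0) => //; apply: P1c.
  exfalso; apply: (@part2_real R N d2 d1 K c0) => //; last by apply: P1c.
  by move=> c; apply: iff_sym.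
move: hd; rewrite /d1 /d2 => /eqP; rewrite eqr_sqrt; last first.
- by have := d_bounds he2; case=> + _; rewrite sqrtr_gt0 => /ltW.
- by have := d_bounds he1; case=> + _; rewrite sqrtr_gt0 => /ltW.
move=> /eqP h; case/andP: he1 => a1 _; case/andP: he2 => a2 _.
rewrite !expr2 in h; nra.
Qed.
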